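(* Let $n\ge1$. If $A\subseteq\Omega_n$ has odd cardinality, then $\mu_n(A)\neq0$.
   Context: For $n\ge1$, $\Omega_n$ is the set of strings $\omega=\alpha_0\alpha_1\cdots\alpha_n$ with $\alpha_k\in\{0,1\}$, $\alpha_0=0$. For $\omega=\alpha_0\cdots\alpha_n$, $\omega'=\alpha'_0\cdots\alpha'_n\in\Omega_n$ let $D^n(\omega,\omega')=2^{-n}\prod_{k=1}^n i^{|\alpha_k-\alpha_{k-1}|}\prod_{k=1}^n i^{-|\alpha'_k-\alpha'_{k-1}|}\,\delta_{\alpha_n\alpha'_n}$ ($i=\sqrt{-1}$), and for $A\subseteq\Omega_n$ let $\mu_n(A)=\sum_{\omega,\omega'\in A}D^n(\omega,\omega')$. *)

(* Defs.v *)
From mathcomp Require Import all_boot all_order all_algebra all_field.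
Set Implicit Arguments. Unset Strict Implicit. Unset Printing Implicit Defensive.
Import Order.TTheory GRing.Theory Num.Theory.
Local Open Scope ring_scope.

Definition bstring (n : nat) := {ffun 'I_n.+1 -> bool}.

(* k-th letter alpha_k, as a natural number 0/1 (index read modulo bounds via inord). *)
Definition letter (n : nat) (w : bstring n) (k : nat) : nat := nat_of_bool (w (inord k)).

Definition Omega (n : nat) : {set bstring n} := [set w : bstring n | ~~ w ord0].

Definition jump (n : nat) (w : bstring n) (k : nat) : nat :=
  `|(letter w k)%:Z - (letter w k.-1)%:Z|%N.

Definition Dn (n : nat) (w w' : bstring n) : algC :=
  (2 ^- n) * (\prod_(1 <= k < n.+1) 'i ^+ jump w k)
           * (\prod_(1 <= k < n.+1) 'i ^- jump w' k)
           * (letter w n == letter w' n)%:R.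

Definition mu (n : nat) (A : {set bstring n}) : algC :=
  \sum_(w in A) \sum_(w' in A) Dn w w'.

(* Main.v *)
Require Import Defs.
From mathcomp Require Import all_boot all_order all_algebra all_field.
Import Order.TTheory GRing.Theory Num.Theory.
Local Open Scope ring_scope.

Section Aux.
Variable n : nat.

Definition JJ (w : bstring n) : nat := (\sum_(1 <= k < n.+1) jump w k)%N.
Definition es (w : bstring n) : int := (-1) ^+ (JJ w)./2.

Lemma odd_jump (w : bstring n) k : odd (jump w k) = odd (letter w k) (+) odd (letter w k.-1).
Proof. by rewrite /jump /letter; case: (w _); case: (w _). Qed.

Lemma odd_sumjump (w : bstring n) m :
  odd (\sum_(1 <= k < m.+1) jump w k) = odd (letter w m) (+) odd (letter w 0).
Proof.
elim: m => [|m IH]; first by rewrite big_geq // addbb.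
rewrite big_nat_recr //= oddD IH odd_jump /=.
by case: (odd (letter w m)); case: (odd (letter w m.+1)); case: (odd (letter w 0)).
Qed.

Lemma letter0 (w : bstring n) : w \in Omega n -> letter w 0 = 0%N.
Proof.
rewrite inE /letter => H.
have -> : inord 0 = ord0 :> 'I_n.+1 by apply: val_inj; rewrite /= inordK.
by move/negbTE: H => ->.
Qed.

Lemma oddJJ (w : bstring n) : w \in Omega n -> odd (JJ w) = odd (letter w n).
Proof. by move=> H; rewrite /JJ odd_sumjump letter0 //= addbF. Qed.

Lemma g_eq (w : bstring n) :
  \prod_(1 <= k < n.+1) 'i ^+ jump w k = (es w)%:~R * ('i : algC) ^+ odd (JJ w).
Proof.
rewrite prodrXr -/(JJ w).
rewrite -{1}(odd_double_half (JJ w)) exprD -muln2 mulnC exprM sqrCi mulrC.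
by rewrite /es rmorphXn /= rmorphN1.
Qed.

Lemma letter_bool (w : bstring n) : letter w n = odd (letter w n) :> nat.
Proof. by rewrite /letter; case: (w _). Qed.

Lemma Dn_eq (w w' : bstring n) : w \in Omega n -> w' \in Omega n ->
  Dn w w' = 2 ^- n * ((es w * es w')%:~R * (odd (JJ w) == odd (JJ w'))%:R).
Proof.
move=> Hw Hw'.
rewrite /Dn.
have -> : \prod_(1 <= k < n.+1) ('i : algC) ^- jump w' k
   = (\prod_(1 <= k < n.+1) 'i ^+ jump w' k)^-1 by rewrite prodfV.
have -> : (letter w n == letter w' n) = (odd (JJ w) == odd (JJ w')).
  rewrite oddJJ // oddJJ //.
  by rewrite /letter; case: (w _); case: (w' _).
rewrite !g_eq.
rewrite -mulrA -mulrA; congr (_ * _).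
case: eqP => [E|NE].
  rewrite E !mulr1 invfM rmorphM /= mulrCA !mulrA.
  have Hi : ('i : algC) ^+ odd (JJ w') != 0 by rewrite expf_neq0 // neq0Ci.
  rewrite -(mulrA _ (_ ^+ _)) mulfV // mulr1 mulrC.
  by rewrite /es !rmorphXn /= !rmorphN1 invr_sign.
by rewrite !mulr0 /=.
Qed.

End Aux.
Arguments JJ {n}.
Arguments es {n}.
Arguments Dn_eq {n}.

Theorem lemma2p6 (n : nat) (A : {set bstring n}) :
  (1 <= n)%N -> A \subset Omega n -> odd #|A| -> mu A != 0.
Proof.
move=> _ HA Hodd.
pose b (w : bstring n) := odd (JJ w).
pose z (c : bool) : int := \sum_(w in A | b w == c) es w.
have Hmu : mu A = 2 ^- n * (((z false)^+2 + (z true)^+2)%:~R).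
  rewrite /mu.
  have -> : \sum_(w in A) \sum_(w' in A) Dn w w' =
     \sum_(w in A) \sum_(w' in A) 2 ^- n * ((es w * es w')%:~R * (b w == b w')%:R).
    apply: eq_bigr => w Hw; apply: eq_bigr => w' Hw'.
    by rewrite Dn_eq //; apply: (subsetP HA).
  under eq_bigr do rewrite -mulr_sumr.
  rewrite -mulr_sumr; congr (_ * _).
  have E : forall c : bool, (z c)%:~R = \sum_(w in A) (es w)%:~R * (b w == c)%:R :> algC.
    move=> c; rewrite /z rmorph_sum /= big_mkcondr /=; apply: eq_bigr => w _.
    by case: (b w == c); rewrite ?mulr1 ?mulr0.
  rewrite rmorphD /= !rmorphXn /= !E !expr2 !mulr_suml.
  rewrite -big_split /=; apply: eq_bigr => w _.
  rewrite !mulr_sumr -big_split /=; apply: eq_bigr => w' _.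
  rewrite rmorphM /=.
  by case: (b w); case: (b w') => /=; rewrite ?mulr1 ?mulr0 ?mul0r ?add0r ?addr0.
rewrite Hmu mulf_eq0 negb_or invr_eq0 expf_neq0 ?pnatr_eq0 //= intr_eq0.
have Hz : forall c, (z c = (\sum_(w in A | b w == c) 1)%N%:Z
              - 2 * (\sum_(w in A | b w == c) odd (JJ w)./2)%N%:Z).
  move=> c; rewrite /z -!natz !natr_sum mulr_sumr -sumrB; apply: eq_bigr => w _.
  rewrite /es -signr_odd; case: (odd _) => //=.
have Hc : (\sum_(w in A | b w == false) 1 + \sum_(w in A | b w == true) 1)%N = #|A|.
  rewrite -sum1_card [RHS](bigID (fun w => b w)) /= addnC; congr (_ + _)%N.
    by apply: eq_bigl => w; case: (b w); rewrite ?andbT ?andbF.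
  by apply: eq_bigl => w; case: (b w); rewrite ?andbT ?andbF.
apply/negP => /eqP H0.
have Hz0 : forall c, z c = 0.
  have h1 := sqr_ge0 (z false); have h2 := sqr_ge0 (z true).
  move=> c; apply/eqP; rewrite -sqrf_eq0.
  move: H0 => /eqP; rewrite paddr_eq0 // => /andP [/eqP A1 /eqP A2].
  by case: c; apply/eqP.
have Hev : forall c, ~~ odd (\sum_(w in A | b w == c) 1)%N.
  move=> c; move: (Hz0 c); rewrite Hz => /eqP; rewrite subr_eq0 => /eqP.
  rewrite -PoszM => [[->]]. by rewrite mul2n odd_double.
by move: Hodd; rewrite -Hc oddD (negbTE (Hev false)) (negbTE (Hev true)).
Qed.
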